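(* Let $k$ be a positive integer and $p=t=\frac{k+1}{k+2}$. If $k>1$, bold play is optimal, i.e. $\pi(p,p)=p$. If $k=1$ (so $p=t=\frac23$), the stake sequence $c_1=c_2=c_3=\frac13$, $c_i=0$ for $i\ge4$, is optimal, i.e. $\pi(\frac23,\frac23)=\mathbf P(c_1\beta_1+c_2\beta_2+c_3\beta_3\ge\frac23)$ for these $c_i$.
   Context: Let $\beta_1,\beta_2,\ldots$ be independent Bernoulli random variables with success probability $p$. A stake sequence is a sequence $\gamma=(c_1,c_2,\ldots)$ of non-negative reals with $c_1\ge c_2\ge\cdots$ and $\sum_i c_i=1$; write $S_\gamma=\sum_i c_i\beta_i$. For $0\le p\le t\le 1$ define $\pi(p,t)=\sup\{\mathbf P(S_\gamma\ge t)\mid \gamma \text{ a stake sequence}\}$. Bold play for threshold $t$ is the stake sequence with $c_i=\frac1m$ for $i\le m$ and $c_i=0$ for $i>m$, where $m=\lfloor 1/t\rfloor$; it is optimal if it attains $\pi(p,t)$. For $t>\frac12$ bold play is $c_1=1$, with success probability $p$. *)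

(* Defs.v *)
From HB Require Import structures.
From mathcomp Require Import all_boot all_order all_algebra.
From mathcomp Require Import all_classical all_reals all_analysis.
Set Implicit Arguments. Unset Strict Implicit. Unset Printing Implicit Defensive.
Import Order.TTheory GRing.Theory Num.Theory.
Import numFieldNormedType.Exports.
Local Open Scope classical_set_scope.
Local Open Scope ring_scope.

(* Stake sequence (0-indexed: c 0 = c_1, c 1 = c_2, ...):
   non-negative, non-increasing, with sum 1. *)
Definition stake_seq (R : realType) (c : nat -> R) : Prop :=
  (forall i, 0 <= c i) /\ (forall i, c i.+1 <= c i) /\
  (series c @ \oo --> (1 : R)).

Definition S_stake (R : realType) (T : Type) (c : nat -> R)
  (beta : nat -> T -> R) (w : T) : R :=
  limn (series (fun i => c i * beta i w)).

Definition bernoulli_rv (d : measure_display) (T : measurableType d)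
  (R : realType) (P : probability T R) (p : R) (X : T -> R) : Prop :=
  measurable_fun setT X /\ (forall w, X w = 0 \/ X w = 1) /\
  P (X @^-1` [set 1]) = p%:E.

Definition mutually_independent (d : measure_display) (T : measurableType d)
  (R : realType) (P : probability T R) (X : nat -> T -> R) : Prop :=
  forall (s : seq nat) (B : nat -> set R), uniq s ->
    (forall i, measurable (B i)) ->
    P (\big[setI/setT]_(i <- s) (X i @^-1` B i)) =
    (\prod_(i <- s) P (X i @^-1` B i))%E.

(* beta_1, beta_2, ... independent Bernoulli(p) (0-indexed). *)
Definition iid_bernoulli (d : measure_display) (T : measurableType d)
  (R : realType) (P : probability T R) (p : R) (beta : nat -> T -> R) : Prop :=
  (forall i, bernoulli_rv P p (beta i)) /\ mutually_independent P beta.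

Definition pi_stake (d : measure_display) (T : measurableType d)
  (R : realType) (P : probability T R) (beta : nat -> T -> R) (t : R) : \bar R :=
  ereal_sup [set P [set w | t <= S_stake c beta w] | c in [set c | stake_seq c]].

(* Main.v *)
Require Import Defs.
From HB Require Import structures.
From mathcomp Require Import all_boot all_order all_algebra.
From mathcomp Require Import all_classical all_reals all_analysis.
From mathcomp Require Import zify ring lra.
Set Implicit Arguments. Unset Strict Implicit. Unset Printing Implicit Defensive.
Import Order.TTheory GRing.Theory Num.Theory.
Import numFieldNormedType.Exports.
Local Open Scope classical_set_scope.
Local Open Scope ring_scope.

Section Comb.
Variable (R : realFieldType) (n : nat).
Hypothesis n_gt0 : (0 < n)%N.

Definition upd (V : 'I_n -> R) (w : R) (k : 'I_n) : 'I_n -> R :=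
  fun j => V j + (if j == k then w else 0).

Fixpoint Col (ws : seq R) (U : 'I_n -> R) (h : ('I_n -> R) -> R) : R :=
  if ws is w :: ws' then n%:R^-1 * \sum_(k < n) Col ws' (upd U w k) h else h U.

Variable X : R.
Fixpoint Ber (ws : seq R) (u : R) : R :=
  if ws is w :: ws' then (1 - n%:R^-1) * Ber ws' u + n%:R^-1 * Ber ws' (u + w)
  else ((u <= X)%R)%:R.

Lemma nR_neq0 : (n%:R : R) != 0.
Proof. by rewrite pnatr_eq0 -lt0n. Qed.

Lemma sum_pred1R (k : 'I_n) (w : R) : \sum_(j < n) (if j == k then w else 0) = w.
Proof. by rewrite -big_mkcond big_pred1_eq. Qed.

Lemma sum_ind (k : 'I_n) (F : bool -> R) :
  \sum_(j < n) F (j == k) = F true + (n%:R - 1) * F false.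
Proof.
rewrite (bigD1 k) //= eqxx; congr (_ + _).
rewrite (eq_bigr (fun _ => F false)); last by move=> j /negbTE ->.
rewrite sumr_const cardC1 card_ord -[LHS]mulr_natl; congr (_ * _).
by case: n n_gt0 => // m _; rewrite /= -addn1 natrD addrK.
Qed.

Lemma col_sum ws U :
  Col ws U (fun V => \sum_(k < n) ((V k <= X)%R)%:R) = \sum_(k < n) Ber ws (U k).
Proof.
elim: ws U => [//|w ws IH] U /=.
under eq_bigr do rewrite IH.
rewrite exchange_big /= mulr_sumr; apply: eq_bigr => k _.
rewrite /upd.
under eq_bigr do rewrite eq_sym.
rewrite (sum_ind k (fun b => Ber ws (U k + (if b then w else 0)))) /= addr0.
have := nR_neq0; set m := (n%:R : R) => hm.
by field.
Qed.

Lemma col_const ws U c : Col ws U (fun _ => c) = c.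
Proof.
elim: ws U => [//|w ws IH] U /=.
under eq_bigr do rewrite IH.
rewrite sumr_const card_ord -[c *+ _]mulr_natl mulrA mulVf ?mul1r //; exact: nR_neq0.
Qed.

Lemma col_addc ws U c h : Col ws U (fun V => c + h V) = c + Col ws U h.
Proof.
elim: ws U => [//|w ws IH] U /=.
under eq_bigr do rewrite IH.
rewrite big_split /= sumr_const card_ord -[c *+ _]mulr_natl mulrDr mulrA mulVf ?mul1r //.
exact: nR_neq0.
Qed.

Definition sumL (ws : seq R) := \sum_(w <- ws) w.

Lemma sum_upd U w k : \sum_(j < n) upd U w k j = \sum_(j < n) U j + w.
Proof. by rewrite /upd big_split /= sum_pred1R. Qed.

Lemma col_le ws U h h' :
  (forall V, \sum_(k < n) V k = \sum_(k < n) U k + sumL ws -> h V <= h' V) ->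
  Col ws U h <= Col ws U h'.
Proof.
elim: ws U => [|w ws IH] U H /=.
  by apply: H; rewrite /sumL big_nil addr0.
apply: ler_wpM2l; first by rewrite invr_ge0 ler0n.
apply: ler_sum => k _; apply: IH => V HV; apply: H.
by rewrite HV sum_upd /sumL big_cons addrA.
Qed.

Lemma col_shift w ws U h :
  Col (w :: ws) U h = Col ws U (fun V => n%:R^-1 * \sum_(k < n) h (upd V w k)).
Proof.
elim: ws U => [//|w' ws IH] U.
transitivity (n%:R^-1 * \sum_(j < n) Col (w :: ws) (upd U w' j) h); last first.
  by rewrite [RHS]/=; congr (_ * _); apply: eq_bigr => j _; rewrite IH.
rewrite /= !mulr_sumr.
under eq_bigr do rewrite !mulr_sumr.
under [RHS]eq_bigr do rewrite !mulr_sumr.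
rewrite exchange_big /=; apply: eq_bigr => j _; apply: eq_bigr => k _.
congr (_ * (_ * _)); congr Col.
by apply: boolp.funext => i; rewrite /upd addrAC.
Qed.

End Comb.

Section Point.
Variable (R : realFieldType) (n : nat).
Hypothesis n_gt0 : (0 < n)%N.
Variable X : R.

Definition allL (U : 'I_n -> R) : bool := [forall i, U i <= X].
Definition heavy2 (U : 'I_n -> R) : bool :=
  [exists i, exists i', (i != i') && (X < U i) && (X < U i')].
Definition light (U : 'I_n -> R) : R := \sum_(k < n) ((U k <= X)%R)%:R.

Lemma le_sum1 (F : 'I_n -> R) i : (forall j, 0 <= F j) -> F i <= \sum_j F j.
Proof.
move=> H; rewrite (bigD1 i) //= lerDl; exact: sumr_ge0.
Qed.

Lemma le_sum2 (F : 'I_n -> R) i i' : (forall j, 0 <= F j) -> i != i' ->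
  F i + F i' <= \sum_j F j.
Proof.
move=> H ne; rewrite (bigD1 i) //= (bigD1 i') /=; last by rewrite eq_sym.
by rewrite addrA lerDl; apply: sumr_ge0.
Qed.

Lemma sum_eq1 (j0 : 'I_n) : \sum_(j < n) ((j == j0)%:R : R) = 1.
Proof.
rewrite (bigD1 j0) //= eqxx big1 ?addr0 // => j /negbTE -> //.
Qed.

Lemma light_bound U : light U <= (n%:R - 1) + (allL U)%:R - (heavy2 U)%:R.
Proof.
have Hs : light U = n%:R - \sum_(k < n) ((X < U k)%R)%:R.
  apply/eqP; rewrite eq_sym subr_eq /light -big_split /=.
  rewrite (eq_bigr (fun _ => 1)) ?sumr_const ?card_ord //.
  by move=> k _; rewrite leNgt; case: (X < U k); rewrite /= ?add0r ?addr0.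
have H0 : forall k, 0 <= ((X < U k)%R)%:R :> R by move=> k; rewrite ler0n.
rewrite Hs; case: (boolP (allL U)) => hA.
  have -> : heavy2 U = false.
    rewrite /heavy2; apply/negbTE/negP => /existsP [i /existsP [i' /andP [/andP [_ hi] _]]].
    by move: hA; rewrite /allL => /fintype.forallP /(_ i); rewrite leNgt hi.
  have : 0 <= \sum_(k < n) ((X < U k)%R)%:R :> R by apply: sumr_ge0.
  rewrite /= ?mulr1n ?mulr0n; lra.
move: hA; rewrite /allL negb_forall => /fintype.existsP [i]; rewrite -ltNge => hi.
case: (boolP (heavy2 U)) => hH /=.
  move/fintype.existsP: hH => [j /fintype.existsP [j' /andP [/andP [ne hj] hj']]].
  have := le_sum2 H0 ne; rewrite hj hj' /=. lra.
have := le_sum1 i H0; rewrite hi /=. lra.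
Qed.

Variables (V : 'I_n -> R) (x y r : R).
Hypothesis nX : n%:R * X = 1.
Hypothesis r_ge0 : 0 <= r.
Hypothesis ry : r < y.
Hypothesis rx : r < x.
Hypothesis sumV : \sum_(k < n) V k = 1 - r - x - y.

Ltac hyps := have ? := r_ge0; have ? := ry; have ? := rx.

Definition UU (j k : 'I_n) := upd (upd V y j) x k.

Lemma UUE j k i : UU j k i = V i + (if i == j then y else 0) + (if i == k then x else 0).
Proof. by []. Qed.

Lemma sumUU j k : \sum_(i < n) UU j k i = 1 - r.
Proof. rewrite /UU !sum_upd sumV; ring. Qed.

Lemma F1 j k i : allL (UU j k) -> i != j -> i != k -> X - r <= V i.
Proof.
move=> /fintype.forallP hA nj nk.
have := sumUU j k; rewrite (bigD1 i) //=.
have : \sum_(i' < n | i' != i) UU j k i' <= \sum_(i' < n | i' != i) X.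
  by apply: ler_sum => i' _; apply: hA.
rewrite sumr_const cardC1 card_ord.
rewrite UUE (negbTE nj) (negbTE nk) !addr0.
have -> : X *+ n.-1 = n%:R * X - X.
  have hn : (n.-1)%:R = n%:R - 1 :> R by rewrite -subn1 natrB.
  rewrite -[X *+ _]mulr_natl hn; ring.
rewrite nX. hyps; lra.
Qed.

Lemma F2 j k : allL (UU j k) -> V j < X - r /\ V k < X - r.
Proof.
move=> /fintype.forallP hA; split.
  have := hA j; rewrite UUE eqxx.
  by case: (j == k) => /= h; hyps; lra.
have := hA k; rewrite UUE eqxx.
by case: (k == j) => /= h; hyps; lra.
Qed.

Lemma F4 a b : X - r <= V a -> X - r <= V b -> a != b -> heavy2 (UU a b).
Proof.
move=> ha hb ne; apply/fintype.existsP; exists a; apply/fintype.existsP; exists b.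
rewrite ne /= !UUE eqxx (negbTE ne) eq_sym (negbTE ne) eqxx.
apply/andP; split; hyps; lra.
Qed.

Lemma UUuniq j k k' : allL (UU j k) -> allL (UU j k') -> k = k'.
Proof.
move=> h1 h2; apply/eqP; apply/negP => /negP ne.
have ne' : k' != k by rewrite eq_sym.
have hk' : k' = j.
  apply/eqP; apply/negP => /negP nj.
  have := F1 h1 nj ne'; have [_ +] := F2 h2; lra.
have hk : k = j.
  apply/eqP; apply/negP => /negP nj.
  have := F1 h2 nj ne; have [_ +] := F2 h1; lra.
by move: ne; rewrite hk hk' eqxx.
Qed.

Lemma row_le1 j : \sum_(k < n) ((allL (UU j k))%:R : R) <= 1.
Proof.
case: (pickP (fun k => allL (UU j k))) => [k0 hk0 | none].
  rewrite (bigD1 k0) //= hk0 big1 ?addr0 // => k nk.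
  case: (boolP (allL (UU j k))) => // hk.
  by move: nk; rewrite (UUuniq hk hk0) eqxx.
by rewrite big1 // => k _; rewrite none.
Qed.

Lemma countA : \sum_(j < n) \sum_(k < n) ((allL (UU j k))%:R : R) <= 2.
Proof.
case: (pickP (fun jk : 'I_n * 'I_n => allL (UU jk.1 jk.2))) => [[j0 k0] /= h0 | none].
  apply: (@le_trans _ _ (\sum_(j < n) (((j == j0)%:R : R) + (j == k0)%:R))).
    apply: ler_sum => j _.
    case: (boolP ((j == j0) || (j == k0))) => hj.
      apply: le_trans (row_le1 j) _.
      by case/orP: hj => ->; rewrite ?addr0 ?add0r -?natrD ?ler1n // addn_gt0 orbT.
    rewrite big1; first by rewrite addr_ge0 ?ler0n.
    move=> k _; case: (boolP (allL (UU j k))) => // hA.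
    move: hj; rewrite negb_or => /andP [n1 n2].
    have := F1 h0 n1 n2; have [+ _] := F2 hA; lra.
  by rewrite big_split /= !sum_eq1.
by rewrite big1 ?ler0n // => j _; rewrite big1 // => k _; have := none (j, k) => /= ->.
Qed.

Lemma two_others (n4 : (3 < n)%N) (a b : 'I_n) :
  exists i1 i2 : 'I_n, [/\ i1 != i2, (i1 != a) && (i1 != b) & (i2 != a) && (i2 != b)].
Proof.
have : (1 < #|(~: [set a; b])%SET|)%N.
  rewrite cardsCs finset.setCK cards2 card_ord; case: (a != b) => /=; lia.
move/card_gt1P => [i1 [i2 [h1 h2 ne]]]; exists i1, i2.
by move: h1 h2; rewrite !finset.in_setC !in_set2 !negb_or => -> ->.
Qed.

Lemma countAH (n4 : (3 < n)%N) :
  \sum_(j < n) \sum_(k < n) ((allL (UU j k))%:R : R) <=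
  \sum_(j < n) \sum_(k < n) ((heavy2 (UU j k))%:R : R).
Proof.
case: (pickP (fun jk : 'I_n * 'I_n => allL (UU jk.1 jk.2))) => [[j0 k0] /= h0 | none].
  apply: le_trans countA _.
  have [i1 [i2 [ne /andP [a1 b1] /andP [a2 b2]]]] := two_others n4 j0 k0.
  have f1 := F1 h0 a1 b1; have f2 := F1 h0 a2 b2.
  have G0 : forall j, 0 <= \sum_(k < n) ((heavy2 (UU j k))%:R : R).
    by move=> j; apply: sumr_ge0 => k _; rewrite ler0n.
  apply: le_trans (le_sum2 G0 ne).
  have K0 : forall j k, 0 <= ((heavy2 (UU j k))%:R : R) by move=> *; rewrite ler0n.
  have e1 := le_sum1 i2 (K0 i1); have e2 := le_sum1 i1 (K0 i2).
  rewrite (F4 f1 f2 ne) in e1; rewrite eq_sym in ne; rewrite (F4 f2 f1 ne) in e2.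
  move: e1 e2 => /=; lra.
rewrite big1; last by move=> j _; rewrite big1 // => k _; have := none (j, k) => /= ->.
by apply: sumr_ge0 => j _; apply: sumr_ge0 => k _; rewrite ler0n.
Qed.

End Point.

Lemma ber_bound (R : realFieldType) (n : nat) (X x y r : R) (rest : seq R) :
  (2 < n)%N -> n%:R * X = 1 -> 0 <= r -> r < y -> r < x ->
  x + y + sumL rest = 1 - r ->
  n%:R * Ber n X (x :: y :: rest) 0 <=
    (n%:R - 1) + n%:R^-1 * n%:R^-1 * (if (3 < n)%N then 0 else 2).
Proof.
move=> n3 nX r0 ry rx hs.
have n0 : (0 < n)%N by lia.
have -> : n%:R * Ber n X (x :: y :: rest) 0 =
    \sum_(k < n) Ber n X (x :: y :: rest) ((fun _ : 'I_n => (0:R)) k).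
  by rewrite sumr_const card_ord mulr_natl.
rewrite -(col_sum n0).
set h := fun V : 'I_n -> R => (allL X V)%:R - (heavy2 X V)%:R :> R.
apply: (@le_trans _ _ (Col (x :: y :: rest) (fun _ => 0)
                         (fun V => (n%:R - 1) + h V))).
  apply: col_le => V _; rewrite /h addrA; exact: light_bound.
rewrite (col_addc n0); apply: lerD => //; rewrite !col_shift.
set b := (X in n%:R^-1 * n%:R^-1 * X).
rewrite -(col_const n0 rest (fun _ => 0) (n%:R^-1 * n%:R^-1 * b)).
apply: col_le => V hV; rewrite big1_eq add0r in hV.
have sumV : \sum_(k < n) V k = 1 - r - x - y.
  rewrite hV; move: hs; rewrite /sumL => hs. lra.
rewrite -mulr_sumr -mulrA; apply: ler_wpM2l; first by rewrite invr_ge0 ler0n.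
apply: ler_wpM2l; first by rewrite invr_ge0 ler0n.
rewrite /h.
under eq_bigr do rewrite sumrB.
rewrite sumrB.
have HA := countA n0 nX r0 ry rx sumV.
have H0 : 0 <= \sum_(j < n) \sum_(k < n) ((heavy2 X (UU V x y j k))%:R : R).
  by apply: sumr_ge0 => j _; apply: sumr_ge0 => k _; rewrite ler0n.
rewrite /b; case: ifP => n4.
  rewrite subr_le0; exact: (countAH n0 nX r0 ry rx sumV n4).
lra.
Qed.

Section Prob.
Context (R : realType) (d : measure_display) (T : measurableType d)
  (P : probability T R) (beta : nat -> T -> R) (p : R).
Hypothesis hb : forall i, bernoulli_rv P p (beta i).
Hypothesis hi : mutually_independent P beta.

Definition bit i w : bool := beta i w == 1.
Fixpoint read (m N : nat) (w : T) : seq bool :=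
  if N is N'.+1 then bit m w :: read m.+1 N' w else [::].
Definition Ev m N (phi : seq bool -> bool) : set T := [set w | phi (read m N w)].
Fixpoint Efn N (phi : seq bool -> bool) : R :=
  if N is N'.+1 then p * Efn N' (fun e => phi (true :: e)) +
                     (1 - p) * Efn N' (fun e => phi (false :: e))
  else (phi [::])%:R.

Lemma b01 i w : beta i w = 0 \/ beta i w = 1.
Proof. by case: (hb i) => _ [+ _]. Qed.

Lemma meas_pre i (B : set R) : measurable B -> measurable (beta i @^-1` B).
Proof.
move=> mB; case: (hb i) => mb _.
by have := mb measurableT _ mB; rewrite setTI.
Qed.

Lemma P1 i : P (beta i @^-1` [set 1]) = p%:E.
Proof. by case: (hb i) => _ [_ ->]. Qed.

Lemma pre0C i : beta i @^-1` [set 0] = ~` (beta i @^-1` [set 1]).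
Proof.
apply/seteqP; split => w /=.
  by move=> ->; apply/eqP; rewrite eq_sym oner_eq0.
by case: (b01 i w).
Qed.

Lemma P0 i : P (beta i @^-1` [set 0]) = (1 - p)%:E.
Proof.
rewrite pre0C probability_setC ?P1 //; exact: meas_pre.
Qed.

Lemma Ev_split m N phi :
  Ev m N.+1 phi =
  (beta m @^-1` [set 1] `&` Ev m.+1 N (fun e => phi (true :: e))) `|`
  (beta m @^-1` [set 0] `&` Ev m.+1 N (fun e => phi (false :: e))).
Proof.
have e01 : ((0 : R) == 1) = false by rewrite eq_sym oner_eq0.
apply/seteqP; split => w; rewrite /Ev /= /bit; case: (b01 m w) => ->;
  rewrite ?eqxx ?e01.
- by move=> h; right.
- by move=> h; left.
- by case => [][h1 h2] //; move: h1 => /eqP; rewrite e01.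
- by case => [][h1 h2] //; move: h1 => /eqP; rewrite eq_sym e01.
Qed.

Lemma Ev_meas N : forall m phi, measurable (Ev m N phi).
Proof.
elim: N => [|N IH] m phi.
  rewrite /Ev /=; case: (phi [::]).
    by have -> : [set _ : T | true] = setT by apply/seteqP; split.
  by have -> : [set _ : T | false] = set0 by apply/seteqP; split.
rewrite Ev_split; apply: measurableU; apply: measurableI => //; exact: meas_pre.
Qed.

Definition Cyl (s : seq nat) (B : nat -> set R) : set T :=
  \big[setI/setT]_(i <- s) (beta i @^-1` B i).

Lemma Cyl_meas s B : (forall i, measurable (B i)) -> measurable (Cyl s B).
Proof.
move=> mB; elim: s => [|i s IH]; rewrite /Cyl ?big_nil ?big_cons //.
apply: measurableI => //; exact: meas_pre.
Qed.

Lemma fin_P (A : set T) : measurable A -> P A = (fine (P A))%:E.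
Proof. by move=> mA; rewrite fineK // fin_num_measure. Qed.

Lemma Ev_prob N : forall m phi s B, uniq s -> all (fun i => (i < m)%N) s ->
  (forall i, measurable (B i)) ->
  P (Ev m N phi `&` Cyl s B) = ((Efn N phi)%:E * P (Cyl s B))%E.
Proof.
elim: N => [|N IH] m phi s B us als mB.
  rewrite /Ev /=; case: (phi [::]).
    have -> : [set _ : T | true] = setT by apply/seteqP; split.
    by rewrite setTI mul1e.
  have -> : [set _ : T | false] = set0 by apply/seteqP; split.
  by rewrite set0I measure0 mul0e.
have mS := Cyl_meas s mB.
have key : forall (b : bool), 
  let B1 := fun i => if i == m then [set (if b then 1 else 0)] else B i in
  P ((beta m @^-1` [set (if b then 1 else 0)] `&` Ev m.+1 N (fun e => phi (b :: e))) `&` Cyl s B)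
  = ((Efn N (fun e => phi (b :: e)))%:E * ((if b then p else 1 - p)%:E * P (Cyl s B)))%E.
  move=> b B1.
  have mB1 : forall i, measurable (B1 i).
    by move=> i; rewrite /B1; case: (i == m).
  have CB : Cyl s B1 = Cyl s B.
    rewrite /Cyl; apply: eq_big_seq => i /(allP als) ilt.
    by rewrite /B1 (ltn_eqF ilt).
  have PB : (\prod_(i <- s) P (beta i @^-1` B1 i) = \prod_(i <- s) P (beta i @^-1` B i))%E.
    apply: eq_big_seq => i /(allP als) ilt.
    by rewrite /B1 (ltn_eqF ilt).
  have -> : (beta m @^-1` [set (if b then 1 else 0)] `&` Ev m.+1 N (fun e => phi (b :: e))) `&` Cyl s B
      = Ev m.+1 N (fun e => phi (b :: e)) `&` Cyl (m :: s) B1.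
    rewrite /Cyl big_cons -/(Cyl s B1) CB /B1 eqxx.
    by rewrite (setIC (beta m @^-1` _)) setIA.
  rewrite IH //; last first.
  - by rewrite /= ltnSn /=; apply/allP => i /(allP als) /ltnW.
  - by rewrite /= us andbT; apply/negP => /(allP als); rewrite ltnn.
  congr (_ * _)%E.
  have um : uniq (m :: s).
    by rewrite /= us andbT; apply/negP => /(allP als); rewrite ltnn.
  rewrite /Cyl (hi um mB1) big_cons /B1 eqxx PB -(hi us mB) -/(Cyl s B).
  congr (_ * _)%E.
  by case: (b); rewrite ?P1 ?P0.
rewrite Ev_split setIUl measureU; last first.
- apply/seteqP; split => // w [[[h1 _] _] [[h0 _] _]].
  by move: h1 h0 => /= ->; apply/eqP; rewrite oner_eq0.
- by apply: measurableI => //; apply: measurableI; [exact: meas_pre|exact: Ev_meas].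
- by apply: measurableI => //; apply: measurableI; [exact: meas_pre|exact: Ev_meas].
have k1 := key true; have k0 := key false; rewrite /= in k1 k0.
transitivity ((Efn N (fun e => phi (true :: e)))%:E * (p%:E * P (Cyl s B)) + (Efn N (fun e => phi (false :: e)))%:E * ((1-p)%:E * P (Cyl s B)))%E.
  by congr (_ + _)%E; [exact: k1 | exact: k0].
rewrite (fin_P mS) -!EFinM -EFinD /=; congr (_%:E); ring.
Qed.

Lemma Ev_prob0 N phi : P (Ev 0 N phi) = (Efn N phi)%:E.
Proof.
have := @Ev_prob N 0 phi [::] (fun _ => setT) erefl erefl (fun _ => measurableT).
by rewrite /Cyl big_nil setIT probability_setT mule1.
Qed.

End Prob.


Lemma serE (R : realType) (u : nat -> R) n : series u n = \sum_(0 <= k < n) u k.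
Proof. by rewrite seriesEnat. Qed.

Section Loss.
Variable R : realType.
Fixpoint lossL (ws : seq R) (e : seq bool) : R :=
  match ws, e with
  | w :: ws', b :: e' => (if b then 0 else w) + lossL ws' e'
  | _, _ => 0
  end.
Fixpoint csL (c : nat -> R) m N : seq R :=
  if N is N'.+1 then c m :: csL c m.+1 N' else [::].

Lemma size_csL c m N : size (csL c m N) = N.
Proof. by elim: N m => //= N IH m; rewrite IH. Qed.

Lemma sumL_csL c m N : sumL (csL c m N) = \sum_(m <= i < m + N) c i.
Proof.
elim: N m => [|N IH] m; first by rewrite /sumL big_nil addn0 big_geq.
rewrite /= /sumL big_cons -/(sumL _) IH.
rewrite [in RHS](@big_ltn _ _ _ m (m + N.+1)%N); last lia.
by rewrite addSnnS.
Qed.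

Lemma Efn_ext (p : R) N phi psi : (forall e, phi e = psi e) -> Efn p N phi = Efn p N psi.
Proof.
elim: N phi psi => [|N IH] phi psi H /=; first by rewrite H.
by congr (_ * _ + _ * _); apply: IH => e; exact: H.
Qed.

Lemma Efn_Ber (n : nat) (p X : R) ws u : p = 1 - n%:R^-1 ->
  Efn p (size ws) (fun e => u + lossL ws e <= X) = Ber n X ws u.
Proof.
move=> hp; elim: ws u => [|w ws IH] u /=; first by rewrite addr0.
congr (_ * _ + _ * _).
- by [].
- by rewrite -IH; apply: Efn_ext => e /=; rewrite add0r.
- by rewrite hp; ring.
- by rewrite -IH; apply: Efn_ext => e /=; rewrite addrA.
Qed.
End Loss.

Section Stake.
Context (R : realType) (d : measure_display) (T : measurableType d)
  (P : probability T R) (beta : nat -> T -> R) (p : R).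
Hypothesis hb : forall i, bernoulli_rv P p (beta i).
Hypothesis hi : mutually_independent P beta.

Lemma loss_read c m N w :
  lossL (csL c m N) (read beta m N w) = \sum_(m <= i < m + N) c i * (1 - beta i w).
Proof.
elim: N m => [|N IH] m; first by rewrite /= addn0 big_geq.
rewrite /= IH.
rewrite [in RHS](@big_ltn _ _ _ m (m + N.+1)%N); last lia.
rewrite addSnnS; congr (_ + _).
rewrite /bit; case: (b01 hb m w) => ->; rewrite ?eqxx ?subrr ?mulr0 //.
by rewrite eq_sym oner_eq0 subr0 mulr1.
Qed.

Variable c : nat -> R.
Hypothesis hc : stake_seq c.

Lemma c_ge0 i : 0 <= c i.
Proof. by case: hc. Qed.

Lemma c_noninc i j : (i <= j)%N -> c j <= c i.
Proof.
move=> /subnK <-; elim: (j - i)%N => [|k IH]; first by rewrite add0n.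
apply: le_trans IH; rewrite addSn; by case: hc => _ [+ _].
Qed.

Lemma ser_nd : {homo series c : a b / (a <= b)%N >-> a <= b}.
Proof. move=> a b ab; apply: nondecreasing_series => // k _ _; exact: c_ge0. Qed.

Lemma ser_cvg : series c @ \oo --> (1 : R).
Proof. by case: hc => _ []. Qed.

Lemma ser_le1 M : series c M <= 1.
Proof.
have <- : limn (series c) = 1 by apply: cvg_lim => //; exact: ser_cvg.
apply: nondecreasing_cvgn_le; first exact: ser_nd.
exact: cvgP ser_cvg.
Qed.

Lemma r_small e : 0 < e -> exists N, forall M, (N <= M)%N -> 1 - series c M < e.
Proof.
move=> he; have := (cvgrPdist_lt _ _).1 ser_cvg e he => -[N _ H].
exists N => M hM; apply: le_lt_trans (H M hM); exact: ler_norm.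
Qed.

Section W.
Variable w : T.
Let a := fun i => c i * beta i w.

Lemma a_ge0 i : 0 <= a i.
Proof. rewrite /a; case: (b01 hb i w) => ->; rewrite ?mulr0 ?mulr1 //; exact: c_ge0. Qed.

Lemma a_le i : a i <= c i.
Proof. rewrite /a; case: (b01 hb i w) => ->; rewrite ?mulr0 ?mulr1 //; exact: c_ge0. Qed.

Lemma sera_nd : {homo series a : x y / (x <= y)%N >-> x <= y}.
Proof. move=> x y xy; apply: nondecreasing_series => // k _ _; exact: a_ge0. Qed.

Lemma sera_le M : series a M <= series c M.
Proof. by rewrite !serE; apply: ler_sum => i _; exact: a_le. Qed.

Lemma sera_cvg : cvgn (series a).
Proof.
apply: nondecreasing_is_cvgn; first exact: sera_nd.
exists 1 => _ [M _ <-]; exact: le_trans (sera_le M) (ser_le1 M).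
Qed.

Lemma S_ge M : series a M <= S_stake c beta w.
Proof. exact: nondecreasing_cvgn_le sera_nd sera_cvg M. Qed.

Lemma S_le M : S_stake c beta w <= series a M + (1 - series c M).
Proof.
apply: limr_le; first exact: sera_cvg.
exists M => // M' /= hM.
have := ser_le1 M'; rewrite !serE /a (big_cat_nat (leq0n M) hM) /=.
rewrite (big_cat_nat (leq0n M) hM) /=.
have : \sum_(M <= i < M') c i * beta i w <= \sum_(M <= i < M') c i.
  by apply: ler_sum => i _; exact: a_le.
lra.
Qed.

Lemma loss_eq M : lossL (csL c 0 M) (read beta 0 M w) = series c M - series a M.
Proof.
rewrite loss_read add0n !serE -sumrB; apply: eq_bigr => i _.
by rewrite /a mulrBr mulr1.
Qed.
End W.

Variable t : R.
Definition Ec := [set w | t <= S_stake c beta w].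
Definition EvM M := Ev beta 0 M (fun e => lossL (csL c 0 M) e <= 1 - t).

Lemma EvM_iff M w : EvM M w <-> t <= series (fun i => c i * beta i w) M + (1 - series c M).
Proof.
rewrite /EvM /Ev /= loss_eq; split => h; lra.
Qed.

Lemma Ec_cap : Ec = \bigcap_M EvM M.
Proof.
apply/seteqP; split => w.
  move=> hw M _; apply/EvM_iff; apply: le_trans hw _; exact: S_le.
move=> hw; rewrite /Ec /=; rewrite leNgt; apply/negP => hlt.
have he : 0 < t - S_stake c beta w by rewrite subr_gt0.
have [N HN] := r_small he.
have := hw N Logic.I; move/EvM_iff.
have := S_ge w N; have := HN N (leqnn N); lra.
Qed.

Lemma Ec_meas : measurable Ec.
Proof. rewrite Ec_cap; apply: bigcapT_measurable => M; exact: Ev_meas. Qed.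

Lemma Ec_le M : (P Ec <= P (EvM M))%E.
Proof.
apply: le_measure; rewrite ?inE; [exact: Ec_meas|exact: Ev_meas|].
by rewrite Ec_cap => w; apply.
Qed.

Lemma PEM (n : nat) M : p = 1 - n%:R^-1 ->
  P (EvM M) = (Ber n (1 - t) (csL c 0 M) 0)%:E.
Proof.
move=> hp; rewrite /EvM (Ev_prob0 hb hi); congr (_%:E).
rewrite -(Efn_Ber _ _ _ hp) size_csL; apply: Efn_ext => e; by rewrite add0r.
Qed.

End Stake.


Section Bound.
Context (R : realType) (d : measure_display) (T : measurableType d)
  (P : probability T R) (beta : nat -> T -> R) (p : R).
Hypothesis hb : forall i, bernoulli_rv P p (beta i).
Hypothesis hi : mutually_independent P beta.

Lemma stake_bound (n : nat) c t : stake_seq c -> (2 < n)%N ->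
  p = 1 - n%:R^-1 -> t = 1 - n%:R^-1 ->
  (P (Ec beta c t) <=
   (n%:R^-1 * ((n%:R - 1) + n%:R^-1 * n%:R^-1 * (if (3 < n)%N then 0 else 2)))%:E)%E.
Proof.
move=> hc n3 hp ht.
set b : R := (if (3 < n)%N then 0 else 2).
have n0 : (0:R) < n%:R by rewrite ltr0n; lia.
have X1 : 1 - t = n%:R^-1 by rewrite ht; ring.
have nX : n%:R * (1 - t) = 1 by rewrite X1 mulfV // gt_eqF.
have hb0 : 0 <= b by rewrite /b; case: ifP.
have ni0 : 0 < n%:R^-1 :> R by rewrite invr_gt0.
have pb : 1 - n%:R^-1 <= n%:R^-1 * ((n%:R - 1) + n%:R^-1 * n%:R^-1 * b).
  have -> : n%:R^-1 * ((n%:R - 1) + n%:R^-1 * n%:R^-1 * b) =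
            (1 - n%:R^-1) + n%:R^-1 * n%:R^-1 * n%:R^-1 * b.
    by field; rewrite gt_eqF.
  have h := ltW ni0.
  by rewrite lerDl; repeat apply: mulr_ge0.
case: (eqVneq (c 1%N) 0) => c1.
- have hle : forall M, series c M <= c 0%N.
    case => [|M]; first by rewrite serE big_geq // (c_ge0 hc).
    rewrite serE big_ltn // gerDl.
    have -> : \sum_(1 <= i < M.+1) c i = \sum_(1 <= i < M.+1) (0:R).
      apply: eq_big_nat => i /andP [h1 _]; apply/eqP; rewrite eq_le (c_ge0 hc) andbT.
      by rewrite -c1; apply: c_noninc.
    by rewrite big1_eq.
  have e1 : 0 < 1 - n%:R^-1 :> R.
    rewrite subr_gt0 invf_lt1 // ltr1n; lia.
  have [N HN] := r_small hc e1.
  have c0X : n%:R^-1 < c 0%N.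
    have := HN N (leqnn N); have := hle N; lra.
  apply: le_trans (Ec_le hb hc t 1) _.
  rewrite (PEM hb hi c t 1 hp) lee_fin /= X1.
  have -> : (0 <= n%:R^-1 :> R) = true by apply/idP; exact: ltW.
  have -> : (0 + c 0%N <= n%:R^-1 :> R) = false.
    by apply/negbTE; rewrite -ltNge add0r.
  by rewrite mulr1 mulr0 addr0.
- have c1p : 0 < c 1%N by rewrite lt_def c1 (c_ge0 hc).
  have [N HN] := r_small hc c1p.
  apply: le_trans (Ec_le hb hc t N.+2) _.
  rewrite (PEM hb hi c t N.+2 hp) lee_fin.
  set r := 1 - series c N.+2.
  have r0 : 0 <= r by rewrite /r subr_ge0 (ser_le1 hc).
  have ry : r < c 1%N by apply: HN; lia.
  have rx : r < c 0%N by apply: lt_le_trans ry _; apply: (c_noninc hc).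
  have hs : c 0%N + c 1%N + sumL (csL c 2 N) = 1 - r.
    rewrite /r serE -(add0n N.+2) -sumL_csL /= /sumL !big_cons -/(sumL _).
    ring.
  have := ber_bound n3 nX r0 ry rx hs.
  rewrite -/b => H.
  have -> : Ber n (1 - t) (csL c 0 N.+2) 0 =
            n%:R^-1 * (n%:R * Ber n (1 - t) (c 0%N :: c 1%N :: csL c 2 N) 0).
    by rewrite mulrA mulVf ?gt_eqF // mul1r.
  by apply: ler_wpM2l => //; apply: ltW.
Qed.

End Bound.


Section Lower.
Context (R : realType) (d : measure_display) (T : measurableType d)
  (P : probability T R) (beta : nat -> T -> R) (p : R).
Hypothesis hb : forall i, bernoulli_rv P p (beta i).
Hypothesis hi : mutually_independent P beta.

Definition cb : nat -> R := fun i => if i == 0%N then 1 else 0.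

Lemma cb_sum (F : nat -> R) m : (0 < m)%N ->
  \sum_(0 <= i < m) cb i * F i = F 0%N.
Proof.
move=> m0; rewrite big_ltn // /cb /= mul1r.
rewrite (eq_big_nat _ _ (F2 := fun _ => 0)) ?big1_eq ?addr0 // => i /andP [h1 _].
by case: i h1 => // i _; rewrite mul0r.
Qed.

Lemma cb_stake : stake_seq cb.
Proof.
split; first by move=> i; rewrite /cb; case: (i == 0%N).
split; first by move=> i; rewrite /cb /=; case: (i == 0%N).
apply: cvg_near_cst; exists 1%N => // m /= hm.
have := cb_sum (fun _ => 1) hm; rewrite serE.
by under eq_bigr do rewrite mulr1.
Qed.

Lemma cb_prob t : 0 < t <= 1 -> P (Ec beta cb t) = p%:E.
Proof.
move=> /andP [t0 t1].
have -> : Ec beta cb t = beta 0%N @^-1` [set 1].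
  have S0 : forall w, S_stake cb beta w = beta 0%N w.
    move=> w; rewrite /S_stake; apply: lim_near_cst => //.
    by exists 1%N => // m /= hm; rewrite serE cb_sum.
  apply/seteqP; split => w; rewrite /Ec /= S0.
    by case: (b01 hb 0 w) => -> //; rewrite leNgt t0.
  by move=> ->.
exact: P1.
Qed.

Definition ct : nat -> R := fun i => if (i < 3)%N then 3^-1 else 0.

Lemma ct_sum (F : nat -> R) m : (3 <= m)%N ->
  \sum_(0 <= i < m) ct i * F i = 3^-1 * F 0%N + 3^-1 * F 1%N + 3^-1 * F 2%N.
Proof.
move=> m3; rewrite (big_cat_nat (leq0n 3) m3) /=.
rewrite (eq_big_nat _ _ (F1 := fun i => ct i * F i) (F2 := fun _ => 0) (m := 3)) ?big1_eq ?addr0;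
  last by move=> i /andP [h1 _]; rewrite /ct ltnNge h1 mul0r.
by rewrite big_ltn // big_ltn // big_ltn // big_geq // addr0 /ct /= addrA.
Qed.

Lemma ct_stake : stake_seq ct.
Proof.
split; first by move=> i; rewrite /ct; case: ifP => // _; rewrite invr_ge0 ler0n.
split.
  move=> i; rewrite /ct; case: ifP => h1; first by rewrite ifT //; apply: ltn_trans h1.
  by case: ifP => // _; rewrite invr_ge0 ler0n.
apply: cvg_near_cst; exists 3%N => // m /= hm.
have := ct_sum (fun _ => 1) hm; rewrite serE.
under eq_bigr do rewrite mulr1.
move=> ->; rewrite !mulr1; lra.
Qed.
End Lower.


Section Thirds.
Context (R : realType) (d : measure_display) (T : measurableType d)
  (P : probability T R) (beta : nat -> T -> R) (p : R).
Hypothesis hb : forall i, bernoulli_rv P p (beta i).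
Hypothesis hi : mutually_independent P beta.

Lemma ct_S w : S_stake (ct R) beta w = 3^-1 * beta 0%N w + 3^-1 * beta 1%N w + 3^-1 * beta 2%N w.
Proof.
rewrite /S_stake; apply: lim_near_cst => //.
by exists 3%N => // m /= hm; rewrite serE ct_sum.
Qed.

Lemma ct_tot m : (3 <= m)%N -> \sum_(0 <= i < m) ct R i = 1.
Proof.
move=> hm; have h := ct_sum (fun _ => 1) hm; simpl in h.
rewrite (eq_bigr (fun i => ct R i * 1)); last by move=> i _; rewrite mulr1.
rewrite h !mulr1; lra.
Qed.

Lemma ct_prob : p = 1 - 3%:R^-1 ->
  P (Ec beta (ct R) (1 - 3%:R^-1)) = (20 / 27)%:E.
Proof.
move=> hp.
have -> : Ec beta (ct R) (1 - 3%:R^-1) = EvM beta (ct R) (1 - 3%:R^-1) 3.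
  apply/seteqP; split => w; rewrite /Ec /= ct_S.
    move=> h; apply/(EvM_iff hb); rewrite !serE ct_sum // ct_tot //; lra.
  move/(EvM_iff hb); rewrite !serE ct_sum // ct_tot //; lra.
rewrite (PEM hb hi (ct R) _ 3 hp); congr (_%:E).
rewrite /ct /=.
have -> : 1 - (1 - 3%:R^-1) = 3%:R^-1 :> R by ring.
have e0 : (0 <= 3%:R^-1 :> R) = true by apply/idP; rewrite invr_ge0 ler0n.
have e1 : (0 + 3%:R^-1 <= 3%:R^-1 :> R) = true by rewrite add0r lexx.
have e2 : (0 + 3%:R^-1 + 3%:R^-1 <= 3%:R^-1 :> R) = false.
  by apply/negbTE; rewrite -ltNge; lra.
have e3 : (0 + 3%:R^-1 + 3%:R^-1 + 3%:R^-1 <= 3%:R^-1 :> R) = false.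
  by apply/negbTE; rewrite -ltNge; lra.
rewrite e0 e1 e2 e3 /= ?mulr1 ?mulr0 ?addr0; lra.
Qed.
End Thirds.


Theorem proposition13 (R : realType) (d : measure_display) (T : measurableType d)
  (P : probability T R) (beta : nat -> T -> R) (k : nat) :
  (0 < k)%N ->
  iid_bernoulli P ((k%:R + 1) / (k%:R + 2)) beta ->
  ((1 < k)%N ->
     pi_stake P beta ((k%:R + 1) / (k%:R + 2)) = ((k%:R + 1) / (k%:R + 2))%:E) /\
  (k = 1%N ->
     pi_stake P beta ((k%:R + 1) / (k%:R + 2)) =
     P [set w | 2 / 3 <= 3^-1 * beta 0%N w + 3^-1 * beta 1%N w + 3^-1 * beta 2%N w]).
Proof.
move=> k0 hib.
have ht : (k%:R + 1) / (k%:R + 2) = 1 - (k.+2)%:R^-1 :> R.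
  have hk : 0 <= k%:R :> R by rewrite ler0n.
  rewrite -addn2 natrD; field.
  by apply/negP => /eqP h; lra.
rewrite ht in hib *; case: hib => hb hi.
have n0 : (0 : R) < (k.+2)%:R by rewrite ltr0n.
split.
- move=> k1; apply/eqP; rewrite eq_le; apply/andP; split.
  + apply: ge_ereal_sup => _ [c hc <-].
    apply: le_trans (stake_bound hb hi (n := k.+2) hc _ erefl erefl) _; first lia.
    rewrite lee_fin ifT; last lia.
    rewrite mulr0 addr0 mulrBr mulr1 mulVf ?gt_eqF //.
  + apply: ereal_sup_ubound; exists (cb R); first exact: cb_stake.
    apply: (cb_prob hb); apply/andP; split.
      rewrite subr_gt0 invf_lt1 // ltr1n; lia.
    rewrite lerBlDr lerDl invr_ge0; exact: ltW.
- move=> k1; subst k.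
  have E3 : [set w | 2 / 3 <= 3^-1 * beta 0%N w + 3^-1 * beta 1%N w + 3^-1 * beta 2%N w]
          = Ec beta (ct R) (1 - 3%:R^-1).
    apply/seteqP; split => w; rewrite /Ec /= ct_S; lra.
  rewrite E3 (ct_prob hb hi erefl).
  apply/eqP; rewrite eq_le; apply/andP; split.
  + apply: ge_ereal_sup => _ [c hc <-].
    apply: le_trans (stake_bound hb hi (n := 3) hc _ erefl erefl) _; first lia.
    rewrite lee_fin /=; lra.
  + rewrite -(ct_prob hb hi erefl).
    apply: ereal_sup_ubound; exists (ct R) => //; exact: ct_stake.
Qed.
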